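(* Let $G_n(y)=\sum_{0\le k\le n}B(n,k)y^k$. Then $$\sum_{n\ge 0}G_n(y)\frac{x^n}{n!}=\frac{1}{\cos x-y\sin x}.$$ In particular $\sum_{k}B(n,k)$ equals the Springer number $S_n$, defined by $\sum_{n\ge0}S_n x^n/n!=1/(\cos x-\sin x)$.
   Context: A labeled ballot path is a lattice path from $(0,0)$ with steps $u=(1,1)$, $d=(1,-1)$ never going below the $x$-axis, each step carrying an integer label between $0$ and its height, where the height of a step is the smaller $y$-coordinate of its endpoints. $B(n,k)$ is the number of labeled ballot paths from $(0,0)$ ending at $(n,k)$. *)

(* Defs.v *)
From HB Require Import structures.
From mathcomp Require Import all_boot all_order all_algebra.
Set Implicit Arguments. Unset Strict Implicit. Unset Printing Implicit Defensive.
Import Order.TTheory GRing.Theory Num.Theory.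

(* A labeled ballot path is encoded as a sequence of (step, label) pairs:
   step = true for u=(1,1), false for d=(1,-1).  [lb_end h s] walks the path
   starting at height h; it returns [Some final_height] if the path never goes
   below the x-axis and every label lies between 0 and the height of its step
   (the smaller y-coordinate of its endpoints), and [None] otherwise. *)
Fixpoint lb_end (h : nat) (s : seq (bool * nat)) : option nat :=
  match s with
  | [::] => Some h
  | (true, l) :: s' => if l <= h then lb_end h.+1 s' else None
  | (false, l) :: s' =>
      if (0 < h) && (l <= h.-1) then lb_end h.-1 s' else None
  end.

(* B(n,k): number of labeled ballot paths from (0,0) to (n,k).  Labels are
   drawn from 'I_n.+1, which loses nothing since every step height is < n. *)
Definition B (n k : nat) : nat :=
  #|[set p : n.-tuple (bool * 'I_n.+1) |
       lb_end 0 [seq (x.1, nat_of_ord x.2) | x <- p] == Some k]|.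

Definition G (n : nat) : {poly int} := \sum_(k < n.+1) ((B n k)%:R *: 'X^k)%R.

(* coefficients of x^j/j! in cos x and sin x *)
Definition cos_coef (j : nat) : int := if odd j then 0%R else ((-1) ^+ (j./2))%R.
Definition sin_coef (j : nat) : int := if odd j then ((-1) ^+ (j./2))%R else 0%R.

Definition cmys_coef (j : nat) : {poly int} :=
  ((cos_coef j)%:P - (sin_coef j)%:P * 'X)%R.

(* Main.v *)
Require Import Defs.
From HB Require Import structures.
From mathcomp Require Import all_boot all_order all_algebra.
Import Order.TTheory GRing.Theory Num.Theory.
Lemma card_tupleS (T:finType) n (P : pred (seq T)) :
  #|[set p : n.+1.-tuple T | P p]| = \sum_(x : T) #|[set p : n.-tuple T | P (x :: p)]|.
Proof.
under [RHS]eq_bigr => x _ do rewrite -(sum1dep_card (fun p : n.-tuple T => P (x :: p))).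
rewrite -sum1dep_card.
rewrite pair_big_dep /=.
rewrite (reindex (fun q : T * n.-tuple T => [tuple of q.1 :: q.2])) /=.
  by [].
exists (fun p : n.+1.-tuple T => (thead p, [tuple of behead p])).
  by move=> [x q] _ /=; congr pair; apply/val_inj.
move=> p _; case/tupleP: p => x q /=; exact/val_inj.
Qed.
Lemma card_tuple0 (T:finType) (P : pred (seq T)) :
  #|[set p : 0.-tuple T | P p]| = P [::].
Proof.
have -> : [set p : 0.-tuple T | P p] = if P [::] then setT else set0.
  by apply/setP=> p; rewrite (tuple0 p) inE; case: (P [::]); rewrite ?inE.
by case: (P [::]); rewrite ?cardsT ?cards0 ?card_tuple.
Qed.

Fixpoint bb (n h k : nat) : nat :=
  match n with 0 => (h == k) : nat | n'.+1 => h.+1 * bb n' h.+1 k + h * bb n' h.-1 k end.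

Definition lab {N} (p : seq (bool * 'I_N)) := [seq (x.1, nat_of_ord x.2) | x <- p].

Definition Fc N h n k :=
  #|[set p : n.-tuple (bool * 'I_N) | lb_end h (lab p) == Some k]|.

Lemma sum_pair_bool N (F : bool * 'I_N -> nat) :
  \sum_(x : bool * 'I_N) F x = \sum_(l < N) F (true, l) + \sum_(l < N) F (false, l).
Proof.
rewrite (eq_bigr (fun x => F (x.1, x.2))); last by case.
by rewrite -(pair_bigA _ (fun b l => F (b, l))) big_bool.
Qed.

Lemma sum_lt N m c : m <= N -> \sum_(l < N) (if l < m then c else 0) = m * c.
Proof.
move=> H.
rewrite -(big_mkord xpredT (fun l => if l < m then c else 0)).
rewrite (big_cat_nat (leq0n m) H) /=.
rewrite (@eq_big_nat _ _ _ 0 m _ (fun=> c)); last by move=> i /andP[_ ->].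
rewrite sum_nat_const_nat subn0 big1_seq ?addn0 //.
by move=> i /andP[_]; rewrite mem_iota => /andP[Hi _]; rewrite ltnNge Hi.
Qed.

Lemma Fc_bb N n : forall h k, h + n < N -> Fc N h n k = bb n h k.
Proof.
elim: n => [|n IH] h k H.
  rewrite /Fc (@card_tuple0 _ (fun s => lb_end h (lab s) == Some k)) /=.
  by [].
rewrite /Fc (@card_tupleS _ _ (fun s => lb_end h (lab s) == Some k)) sum_pair_bool /=.
have Hn : forall b, #|[set p : n.-tuple (bool * 'I_N) | (@None nat == Some k)]| * b = 0.
  move=> b; apply/eqP; rewrite muln_eq0 cards_eq0; apply/orP; left.
  by apply/eqP/setP=> p; rewrite !inE.
rewrite (eq_bigr (fun l : 'I_N => if l < h.+1 then Fc N h.+1 n k else 0)); last first.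
  move=> l _; rewrite ltnS; case: ifP => // _.
  by have := Hn 1; rewrite muln1.
rewrite [X in _ + X](eq_bigr (fun l : 'I_N => if l < h then Fc N h.-1 n k else 0)); last first.
  move=> l _; case: h H {Hn} => [|h] H /=.
    apply/eqP; rewrite cards_eq0; apply/eqP/setP=> p; by rewrite !inE.
  rewrite ltnS; case: ifP => // _.
  apply/eqP; rewrite cards_eq0; apply/eqP/setP=> p; by rewrite !inE.
rewrite !sum_lt; last first.
  - exact: leq_ltn_trans (leq_addr n.+1 h) H.
  - exact: ltnW (leq_ltn_trans (leq_addr n.+1 h) H).
rewrite IH; last by rewrite addSnnS.
rewrite IH //; apply: leq_ltn_trans H.
by rewrite leq_add ?leq_pred ?leqnSn.
Qed.
From Stdlib Require Import Arith Lia.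
Lemma bb_last n : forall h k, bb n.+1 h k = k * bb n h k.-1 + k.+1 * bb n h k.+1.
Proof.
elim: n => [|n IH] h k.
  { rewrite /=.
  case: h => [|h]; case: k => [|[|k]] //=; rewrite ?eqSS.
  all: try by case: h => [|[|h]] //=; rewrite ?muln0 ?muln1 ?addn0.
  all: try by rewrite !muln0.
  case: eqP => [->|_]; first by rewrite (ltn_eqF (_ : k < k.+2)).
  by case: eqP => [->|_]; rewrite ?muln0. }
have E : forall m h k, bb m.+1 h k = h.+1 * bb m h.+1 k + h * bb m h.-1 k by []. rewrite E (IH h.+1) (IH h.-1) !E.
rewrite -!multE -!plusE; ring.
Qed.
Lemma bb_zero n : forall h k, h + n < k -> bb n h k = 0.
Proof.
elim: n => [|n IH] h k H /=.
  by rewrite addn0 in H; rewrite (ltn_eqF H).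
rewrite !IH ?muln0 //.
  by apply: leq_ltn_trans H; rewrite leq_add ?leq_pred ?leqnSn.
by rewrite addSnnS.
Qed.
Lemma B_bb n k : B n k = bb n 0 k.
Proof. by rewrite -(@Fc_bb n.+1 n 0 k). Qed.

Local Open Scope ring_scope.
Lemma key_id (R : comPzRingType) (S C X G G' : R) :
  (- S - C * X) * G + (C - S * X) * (X * G + (1 + X ^+ 2) * G') = (1 + X ^+2) * (- S * G + (C - S * X) * G').
Proof.
rewrite mulrDr [in RHS]mulrDr addrA; congr (_ + _); last exact: mulrCA.
rewrite expr2 !mulrDl ?mulrBl !mulNr ?mul1r -!mulrA ?mulrN.
rewrite -addrA; congr (_ + _).
by rewrite addrA addNr add0r (mulrCA S X) (mulrCA S X G).
Qed.
Lemma conv_split (R : pzRingType) (a b : nat -> R) n :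
  \sum_(j < n.+2) ('C(n.+1, j))%:R * a j * b (n.+1 - j)%N =
  \sum_(j < n.+1) ('C(n, j))%:R * a j.+1 * b (n - j)%N
  + \sum_(j < n.+1) ('C(n, j))%:R * a j * b (n.+1 - j)%N.
Proof.
rewrite big_ord_recl /=.
under eq_bigr => i _ do rewrite /bump /= add1n binS natrD !mulrDl subSS.
rewrite big_split /= addrA addrC; congr (_ + _).
rewrite [in RHS]big_ord_recl /= !bin0 !subn0; congr (_ + _).
rewrite big_ord_recr /= bin_small // mul0r mul0r addr0.
apply: eq_bigr => i _; rewrite /bump /= add1n subSS //.
Qed.


Lemma coefG n k : (G n)`_k = (bb n 0 k)%:R.
Proof.
rewrite /G coef_sum.
under eq_bigr => i _ do rewrite coefZ coefXn.
case: (ltnP k n.+1) => Hk.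
  rewrite (bigD1 (Ordinal Hk)) //= eqxx mulr1 big1 ?addr0 ?B_bb //.
  move=> i /eqP Hi; case: eqP => [Hki|]; last by rewrite mulr0.
  by exfalso; apply: Hi; apply: val_inj.
rewrite big1 ?bb_zero //.
move=> i _; case: eqP => [Hki|]; last by rewrite mulr0.
by move: (ltn_ord i) Hk; rewrite -Hki => /leq_trans H /H; rewrite ltnn.
Qed.

Lemma G_rec n : G n.+1 = 'X * G n + (1 + 'X^2) * (G n)^`().
Proof.
apply/polyP => k.
rewrite coefG coefD coefXM mulrDl mul1r coefD coefXnM !coef_deriv !coefG bb_last.
case: k => [|[|k]] /=.
- by rewrite mul0n mul1n add0n add0r addr0.
- by rewrite natrD !natrM !mulr_natl addr0.
- rewrite !subSS subn0 natrD !natrM !mulr_natl [_ *+ k.+2]mulrS -addrA.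
  by rewrite [X in _ + X]addrC.
Qed.

Lemma cos_S j : cos_coef j.+1 = - sin_coef j.
Proof.
rewrite /cos_coef /sin_coef /=.
case: (boolP (odd j)) => Ho /=; last by rewrite oppr0.
by rewrite uphalf_half Ho add1n exprS mulN1r.
Qed.

Lemma sin_S j : sin_coef j.+1 = cos_coef j.
Proof.
rewrite /cos_coef /sin_coef /=.
case: (boolP (odd j)) => Ho //=.
by rewrite uphalf_half (negbTE Ho) add0n.
Qed.

Definition P n : {poly int} :=
  \sum_(j < n.+1) ('C(n, j))%:R * cmys_coef j * G (n - j)%N.

Lemma cmys_d j : (cmys_coef j)^`() = - (sin_coef j)%:P.
Proof. by rewrite /cmys_coef derivB derivC deriv_mulC derivX mulr1 sub0r. Qed.

Lemma P_rec n : P n.+1 = (1 + 'X^2) * (P n)^`().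
Proof.
rewrite /P conv_split -big_split /= raddf_sum mulr_sumr.
apply: eq_bigr => j _.
have Hj : (n.+1 - j = (n - j).+1)%N by rewrite subSn // -ltnS.
rewrite Hj G_rec.
rewrite -!mulrA !mulr_natl raddfMn /= -mulrnDl mulrnAr; congr (_ *+ _).
rewrite derivM cmys_d {1}/cmys_coef cos_S sin_S polyCN.
exact: key_id.
Qed.

Lemma G0 : G 0 = 1.
Proof. by rewrite /G big_ord1 B_bb /= expr0 scale1r. Qed.

Lemma P0 : P 0 = 1.
Proof.
rewrite /P big_ord1 subn0 G0 /cmys_coef /cos_coef /sin_coef /= mulr1 mul1r.
by rewrite mul0r subr0.
Qed.

Lemma P_val n : P n = (n == 0%N)%:R.
Proof.
case: n => [|n]; first by rewrite P0.
elim: n => [|n IH]; first by rewrite P_rec P0 derivC mulr0.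
by rewrite P_rec IH /= deriv0 mulr0.
Qed.

Lemma Gval m : (G m).[1] = (\sum_(k < m.+1) B m k)%:Z.
Proof.
rewrite /G horner_sum.
under eq_bigr => i _ do rewrite hornerZ hornerXn expr1n mulr1.
by rewrite -natr_sum natz.
Qed.

Lemma conv_uniq (a u v e : nat -> int) : a 0%N = 1 ->
  (forall n, \sum_(j < n.+1) ('C(n, j))%:R * a j * u (n - j)%N = e n) ->
  (forall n, \sum_(j < n.+1) ('C(n, j))%:R * a j * v (n - j)%N = e n) ->
  forall n, u n = v n.
Proof.
move=> a0 Hu Hv; elim/ltn_ind => n IH.
have Hs : forall w : nat -> int, \sum_(j < n.+1) ('C(n, j))%:R * a j * w (n - j)%N =
   w n + \sum_(i < n) ('C(n, i.+1))%:R * a i.+1 * w (n - i.+1)%N.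
  by move=> w; rewrite big_ord_recl /= bin0 a0 subn0 mulr1 mul1r.
have := Hu n; rewrite -(Hv n) !Hs.
have -> : \sum_(i < n) ('C(n, i.+1))%:R * a i.+1 * u (n - i.+1)%N =
          \sum_(i < n) ('C(n, i.+1))%:R * a i.+1 * v (n - i.+1)%N.
  apply: eq_bigr => i _; rewrite IH //.
  by rewrite subnSK // leq_subr.
by move/addIr.
Qed.

Theorem theorem4p4 :
  (forall n : nat,
     \sum_(j < n.+1) ('C(n, j))%:R * cmys_coef j * G (n - j)%N
       = (n == 0%N)%:R)
  /\
  (forall S : nat -> int,
     (forall n : nat,
        \sum_(j < n.+1) ('C(n, j))%:R * (cos_coef j - sin_coef j) * S (n - j)%N
          = (n == 0%N)%:R) ->
     forall n : nat, (\sum_(k < n.+1) B n k)%:Z = S n).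
Proof.
split; first exact: P_val.
move=> S HS n.
apply: (@conv_uniq (fun j => cos_coef j - sin_coef j)
  (fun n => (\sum_(k < n.+1) B n k)%:Z) S (fun n => (n == 0%N)%:R)) => //.
move=> m; have := congr1 (fun p => p.[1]) (P_val m).
rewrite /P horner_sum [X in _ = X -> _]hornerMn [X in _ = X *+ _ -> _]hornerE => <-.
apply: eq_bigr => j _.
rewrite !hornerM Gval hornerMn hornerE /cmys_coef !hornerE //.
Qed.
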